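(* Let $n>d$ be positive integers, $\alpha\in(0,1)$, $\hat\theta\in\mathbb{R}$, $\hat\sigma\in(0,\infty)$ fixed, and $\hat\theta_L=\hat\theta-t_{n-d,1-\alpha/2}\hat\sigma/\sqrt n$, $\hat\theta_U=\hat\theta+t_{n-d,1-\alpha/2}\hat\sigma/\sqrt n$. Then, as $m\to\infty$, $$1-\Phi\big(\sqrt{m/n}\,\delta_U(c)\big)\to\begin{cases}1 & c<\hat\theta_L,\\ 1/2 & c=\hat\theta_L,\\ 0 & c>\hat\theta_L,\end{cases}\qquad 1-\Phi\big(\sqrt{m/n}\,\delta_L(c)\big)\to\begin{cases}1 & c<\hat\theta_U,\\ 1/2 & c=\hat\theta_U,\\ 0 & c>\hat\theta_U.\end{cases}$$
   Context: $\Phi$ is the standard normal CDF. For $\nu>0$, $\delta\in\mathbb{R}$, $F_{\nu,\delta}$ is the CDF of the noncentral $t$-distribution with $\nu$ degrees of freedom and noncentrality $\delta$, and $t_{\nu,p}=F_{\nu,0}^{-1}(p)$. For a cutoff $c\in\mathbb{R}$ let $q(c)=\sqrt n\,(c-\hat\theta)/\hat\sigma$, and let $\delta_L(c),\delta_U(c)$ be the unique reals with $F_{n-d,\delta_L(c)}(q(c))=1-\alpha/2$ and $F_{n-d,\delta_U(c)}(q(c))=\alpha/2$. *)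

(* Defs.v *)
From Stdlib Require Import Reals Lra ClassicalEpsilon.
Open Scope R_scope.

Definition is_RInt (f : R -> R) (a b l : R) : Prop :=
  exists pr : Riemann_integrable f a b, RiemannInt pr = l.

(* The Riemann integral (chosen value; well defined when f is integrable). *)
Definition RInt (f : R -> R) (a b : R) : R :=
  epsilon (inhabits 0) (fun l => is_RInt f a b l).

Definition is_RInt_0_infty (f : R -> R) (l : R) : Prop :=
  forall eps, 0 < eps -> exists M, forall b, M <= b ->
    exists l', is_RInt f 0 b l' /\ Rabs (l' - l) < eps.

Definition RInt_0_infty (f : R -> R) : R :=
  epsilon (inhabits 0) (fun l => is_RInt_0_infty f l).

Definition Phi (z : R) : R :=
  / 2 + / sqrt (2 * PI) * RInt (fun t => exp (- (t ^ 2) / 2)) 0 z.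

Definition chi_weight (nu : nat) (s : R) : R := s ^ (nu - 1) * exp (- (s ^ 2) / 2).

(* CDF of the noncentral t distribution with nu d.f. and noncentrality delta:
   T = (Z + delta) / sqrt(V/nu), V ~ chi^2_nu, so with S = sqrt V ~ chi_nu,
   F(x) = E[ Phi (x S / sqrt nu - delta) ]. *)
Definition Fnct (nu : nat) (delta x : R) : R :=
  RInt_0_infty (fun s => Phi (x * s / sqrt (INR nu) - delta) * chi_weight nu s)
  / RInt_0_infty (chi_weight nu).

Definition tquant (nu : nat) (p : R) : R :=
  epsilon (inhabits 0) (fun x => Fnct nu 0 x = p).

Definition qstat (n : nat) (theta sigma c : R) : R :=
  sqrt (INR n) * (c - theta) / sigma.

Definition deltaL (n d : nat) (alpha theta sigma c : R) : R :=
  epsilon (inhabits 0)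
    (fun delta => Fnct (n - d) delta (qstat n theta sigma c) = 1 - alpha / 2).

Definition deltaU (n d : nat) (alpha theta sigma c : R) : R :=
  epsilon (inhabits 0)
    (fun delta => Fnct (n - d) delta (qstat n theta sigma c) = alpha / 2).

(* Main.v *)
Require Import Defs.
From Stdlib Require Import Reals Lra Lia ClassicalEpsilon FunctionalExtensionality.
From Coquelicot Require Import Coquelicot.
Open Scope R_scope.


Lemma bridge (f : R -> R) (a b : R) :
  (forall x, continuous f x) -> Defs.RInt f a b = RInt f a b.
Proof.
intros Hc.
assert (He : ex_RInt f a b) by (apply (@ex_RInt_continuous R_CompleteNormedModule); intros; apply Hc).
assert (Hs : Defs.is_RInt f a b (RInt f a b)).
{ exists (ex_RInt_Reals_0 _ _ _ He). symmetry. apply RInt_Reals. }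
unfold Defs.RInt.
destruct (epsilon_spec (inhabits 0) (fun l => Defs.is_RInt f a b l)
  (ex_intro _ _ Hs)) as [pr Hpr].
rewrite <- Hpr. symmetry. apply RInt_Reals.
Qed.

Lemma exRc (f : R -> R) a b : (forall x, continuous f x) -> ex_RInt f a b.
Proof. intros Hc. apply (@ex_RInt_continuous R_CompleteNormedModule); intros; apply Hc. Qed.

Definition gs (t : R) := exp (- (t ^ 2) / 2).

Lemma gs_cont : forall x, continuous gs x.
Proof. intros x. apply (@ex_derive_continuous R_AbsRing R_NormedModule). unfold gs. auto_derive. easy. Qed.

Lemma gs_pos : forall x, 0 < gs x.
Proof. intros; apply exp_pos. Qed.

Lemma gs_le1 : forall x, gs x <= 1.
Proof. intros; unfold gs. rewrite <- exp_0. assert (0 <= x^2) by nra.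
  destruct (Req_dec x 0). subst; simpl; replace (- (0*(0*1))/2) with 0 by field; lra.
  left; apply exp_increasing. assert (0 < x^2) by (apply pow2_gt_0; auto). lra. Qed.

Definition G x := RInt gs 0 x.

Lemma G_deriv x : is_derive G x (gs x).
Proof.
apply (@is_derive_RInt R_NormedModule gs G 0 x).
- apply filter_forall. intros b. apply (@RInt_correct R_CompleteNormedModule). apply exRc, gs_cont.
- apply gs_cont.
Qed.

Definition hh (u t : R) := exp (- (u ^ 2 * (1 + t ^ 2)) / 2) / (1 + t ^ 2).
Definition dh (u t : R) := - u * exp (- (u ^ 2 * (1 + t ^ 2)) / 2).

Lemma pos1t t : 0 < 1 + t ^ 2.
Proof. nra. Qed.

Lemma hh_der u t : is_derive (fun z => hh z t) u (dh u t).
Proof.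
unfold hh, dh. assert (H := pos1t t).
auto_derive. lra.
replace (- (u * (u * 1) * (1 + t * (t * 1))) * / 2) with (- (u ^ 2 * (1 + t ^ 2)) / 2) by (simpl; field).
field. lra.
Qed.

Lemma dh_cont x t : continuity_2d_pt (fun u v => Derive (fun z => hh z v) u) x t.
Proof.
apply continuity_2d_pt_ext with (f := dh).
{ intros. symmetry. apply is_derive_unique, hh_der. }
unfold dh. apply continuity_2d_pt_mult.
{ apply continuity_2d_pt_opp, continuity_2d_pt_id1. }
apply (continuity_1d_2d_pt_comp exp (fun u v => - (u ^ 2 * (1 + v ^ 2)) / 2)).
{ apply derivable_continuous_pt, derivable_pt_exp. }
apply continuity_2d_pt_ext with (f := fun u v => (- / 2) * ((u * u) * (1 + v * v))).
{ intros; simpl; field. }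
apply continuity_2d_pt_mult; [apply continuity_2d_pt_const|].
apply continuity_2d_pt_mult.
{ apply continuity_2d_pt_mult; apply continuity_2d_pt_id1. }
apply continuity_2d_pt_plus; [apply continuity_2d_pt_const|].
apply continuity_2d_pt_mult; apply continuity_2d_pt_id2.
Qed.

Lemma hh_cont u : forall t, continuous (hh u) t.
Proof. intros t. apply (@ex_derive_continuous R_AbsRing R_NormedModule). unfold hh.
auto_derive. assert (H := pos1t t). lra. Qed.

Definition Hqf x := RInt (hh x) 0 1.

Lemma H_deriv x : is_derive Hqf x (- gs x * G x).
Proof.
assert (D := is_derive_RInt_param hh 0 1 x).
unfold Hqf.
replace (- gs x * G x) with (RInt (fun t => Derive (fun u => hh u t) x) 0 1).
apply D.
- apply filter_forall. intros y t _. eexists. apply hh_der.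
- intros; apply dh_cont.
- apply filter_forall. intros y. apply exRc, hh_cont.
- rewrite (RInt_ext _ (fun t => scal (- gs x) (scal x (gs (x * t + 0))))).
  2:{ intros t _. erewrite is_derive_unique; [|apply hh_der].
      unfold dh, gs, scal; simpl; unfold mult; simpl.
      replace (exp (- (x*(x*1)*(1+t*(t*1)))/2)) with (exp (- (x*(x*1))/2) * exp (- ((x*t+0)*((x*t+0)*1))/2)). ring.
      rewrite <- exp_plus. f_equal. field. }
  rewrite (@RInt_scal R_CompleteNormedModule).
  2:{ apply exRc. intros y. apply (@ex_derive_continuous R_AbsRing R_NormedModule).
      unfold gs, scal; simpl; unfold mult; simpl. auto_derive. easy. }
  rewrite (@RInt_comp_lin R_CompleteNormedModule). 2:{ apply exRc, gs_cont. }
  unfold G, scal; simpl; unfold mult; simpl. f_equal; f_equal; ring.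
Qed.

Lemma F_deriv y : is_derive (fun x => G x ^ 2 + 2 * Hqf x) y 0.
Proof.
assert (Dm := @is_derive_mult R_AbsRing G G y (gs y) (gs y) (G_deriv y) (G_deriv y)
   (fun n m => Rmult_comm n m)).
assert (Ds := is_derive_scal Hqf y 2 _ (H_deriv y)).
assert (Dp := @is_derive_plus R_AbsRing R_NormedModule _ _ y _ _ Dm Ds).
unfold plus, mult in Dp; simpl in Dp.
eapply is_derive_ext; [|replace 0 with (gs y * G y + G y * gs y + 2 * (- gs y * G y)) by ring; exact Dp].
intros t; simpl; ring.
Qed.

Lemma Hqf0 : Hqf 0 = PI / 4.
Proof.
unfold Hqf.
rewrite (RInt_ext _ (fun t => / (1 + t ^ 2))).
2:{ intros t _. unfold hh. replace (- (0 ^ 2 * (1 + t ^ 2)) / 2) with 0 by (simpl; field).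
    unfold Rdiv; rewrite exp_0; apply Rmult_1_l. }
assert (Hd := @is_RInt_derive R_CompleteNormedModule atan (fun t => / (1 + t ^ 2)) 0 1).
assert (D1 : forall x, Rmin 0 1 <= x <= Rmax 0 1 -> is_derive atan x (/ (1 + x ^ 2))).
{ intros x _. apply is_derive_Reals, derivable_pt_lim_atan. }
assert (D2 : forall x, Rmin 0 1 <= x <= Rmax 0 1 -> continuous (fun t => / (1 + t ^ 2)) x).
{ intros x _. apply (@ex_derive_continuous R_AbsRing R_NormedModule). auto_derive.
  assert (Hp := pos1t x). simpl in Hp. lra. }
rewrite (is_RInt_unique _ _ _ _ (Hd D1 D2)).
rewrite atan_1, atan_0. unfold minus, plus, opp; simpl. ring.
Qed.

Lemma Fconst x : G x ^ 2 + 2 * Hqf x = PI / 2.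
Proof.
assert (Hd := @is_RInt_derive R_CompleteNormedModule (fun x => G x ^ 2 + 2 * Hqf x) (fun _ => 0) 0 x).
assert (Hc := @is_RInt_const R_NormedModule 0 x 0).
assert (E := is_RInt_unique _ _ _ _ (Hd (fun y _ => F_deriv y) (fun y _ => continuous_const _ y))).
rewrite (is_RInt_unique _ _ _ _ Hc) in E.
unfold minus, plus, opp, scal in E; simpl in E; unfold mult in E; simpl in E.
assert (G0 : G 0 = 0) by (unfold G; apply (@RInt_point R_CompleteNormedModule)).
rewrite G0, Hqf0 in E. lra.
Qed.

Lemma exp_le (a b : R) : a <= b -> exp a <= exp b.
Proof. intros [h|h]; [left; apply exp_increasing; auto| subst; lra]. Qed.

Lemma H_bounds x : 0 <= Hqf x <= gs x.
Proof.
unfold Hqf. split.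
- apply RInt_ge_0; [lra| apply exRc, hh_cont |].
  intros t _. unfold hh. apply Rlt_le, Rdiv_lt_0_compat; [apply exp_pos| apply pos1t].
- replace (gs x) with (RInt (fun _ => gs x) 0 1).
  2:{ rewrite (@RInt_const R_CompleteNormedModule). unfold scal; simpl; unfold mult; simpl. ring. }
  apply RInt_le; [lra | apply exRc, hh_cont | apply exRc; intros; apply continuous_const |].
  intros t Ht. unfold hh, gs. assert (P := pos1t t).
  apply Rle_trans with (exp (- (x ^ 2 * (1 + t ^ 2)) / 2)).
  + unfold Rdiv at 1. rewrite <- (Rmult_1_r (exp _)) at 2. apply Rmult_le_compat_l.
    apply Rlt_le, exp_pos. rewrite <- Rinv_1. apply Rinv_le_contravar; [lra|]. simpl in *; nra.
  + apply exp_le. assert (0 <= x^2) by nra. assert (0 <= t^2) by nra. nra.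
Qed.

Lemma G_sq_bound x : 0 <= PI / 2 - G x ^ 2 <= 2 * gs x.
Proof. assert (Hf := Fconst x). assert (Hb := H_bounds x). lra. Qed.

Lemma G_ge0 x : 0 <= x -> 0 <= G x.
Proof. intros Hx. unfold G. apply RInt_ge_0; auto. apply exRc, gs_cont. intros; apply Rlt_le, gs_pos. Qed.

Lemma G_chasles a b : G b - G a = RInt gs a b.
Proof.
unfold G. rewrite <- (@RInt_Chasles R_CompleteNormedModule gs 0 a b); try apply exRc, gs_cont.
unfold plus; simpl. ring.
Qed.

Lemma G_strict a b : a < b -> G a < G b.
Proof.
intros h. assert (H1 : 0 < RInt gs a b). { apply RInt_gt_0; auto. intros; apply gs_pos. intros; apply gs_cont. }
rewrite <- G_chasles in H1. lra.
Qed.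

Lemma G_lip a b : Rabs (G b - G a) <= Rabs (b - a).
Proof.
destruct (Rle_dec a b) as [h|h].
- rewrite G_chasles. rewrite (Rabs_right (b - a)) by lra.
  replace (b - a) with ((b - a) * 1) by ring.
  apply abs_RInt_le_const; auto. apply exRc, gs_cont.
  intros. rewrite Rabs_right. apply gs_le1. apply Rle_ge, Rlt_le, gs_pos.
- rewrite Rabs_minus_sym, (Rabs_minus_sym b a). rewrite G_chasles. rewrite (Rabs_right (a - b)) by lra.
  replace (a - b) with ((a - b) * 1) by ring.
  apply abs_RInt_le_const; [lra|apply exRc, gs_cont|].
  intros. rewrite Rabs_right. apply gs_le1. apply Rle_ge, Rlt_le, gs_pos.
Qed.

Lemma G_odd z : G (- z) = - G z.
Proof.
unfold G.
assert (E := @RInt_comp_lin R_CompleteNormedModule gs (-1) 0 0 z (exRc _ _ _ gs_cont)).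
replace (-1 * 0 + 0) with 0 in E by ring. replace (-1 * z + 0) with (- z) in E by ring.
rewrite <- E.
rewrite (RInt_ext _ (fun y => opp (gs y))).
2:{ intros y _. unfold scal, opp; simpl; unfold mult; simpl. unfold gs.
    replace ((-1 * y + 0) ^ 2) with (y ^ 2) by ring. ring. }
rewrite (@RInt_opp R_CompleteNormedModule). reflexivity. apply exRc, gs_cont.
Qed.

Definition S2 := sqrt (PI / 2).

Lemma S2_pos : 0 < S2.
Proof. unfold S2. apply sqrt_lt_R0. assert (Hp := PI_RGT_0). lra. Qed.

Lemma sqrt2PI : sqrt (2 * PI) = 2 * S2.
Proof.
unfold S2. replace (2 * PI) with ((2 * 2) * (PI / 2)) by field.
assert (Hp := PI_RGT_0).
rewrite sqrt_mult by lra. rewrite sqrt_square by lra. reflexivity.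
Qed.

Lemma Phi_G z : Phi z = / 2 + G z / (2 * S2).
Proof.
unfold Phi. rewrite sqrt2PI. change (fun t => exp (- (t ^ 2) / 2)) with gs. rewrite (bridge gs 0 z gs_cont). unfold G.
unfold Rdiv. ring.
Qed.

Lemma Phi_sym z : Phi (- z) = 1 - Phi z.
Proof. rewrite !Phi_G, G_odd. assert (Hs := S2_pos). field. lra. Qed.

Lemma Phi0 : Phi 0 = / 2.
Proof. assert (Hs := Phi_sym 0). rewrite Ropp_0 in Hs. lra. Qed.

Lemma Phi_strict a b : a < b -> Phi a < Phi b.
Proof.
intros h. rewrite !Phi_G. assert (Hs := S2_pos). assert (Hg := G_strict a b h).
apply Rplus_lt_compat_l. unfold Rdiv. apply Rmult_lt_compat_r; auto.
apply Rinv_0_lt_compat; lra.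
Qed.

Lemma Phi_le a b : a <= b -> Phi a <= Phi b.
Proof. intros [h|h]. left; apply Phi_strict; auto. subst; lra. Qed.

Lemma S2_ge : 1 <= 2 * S2.
Proof.
rewrite <- sqrt2PI. rewrite <- sqrt_1. apply sqrt_le_1_alt. assert (Hp := PI2_3_2). lra.
Qed.

Lemma Phi_lip a b : Rabs (Phi b - Phi a) <= Rabs (b - a).
Proof.
rewrite !Phi_G. assert (Hs := S2_ge).
replace (/ 2 + G b / (2 * S2) - (/ 2 + G a / (2 * S2))) with ((G b - G a) / (2 * S2)) by (field; lra).
unfold Rdiv. rewrite Rabs_mult. rewrite (Rabs_right (/ (2 * S2))).
2:{ apply Rle_ge, Rlt_le, Rinv_0_lt_compat; lra. }
apply Rle_trans with (Rabs (G b - G a) * 1).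
apply Rmult_le_compat_l. apply Rabs_pos. rewrite <- Rinv_1. apply Rinv_le_contravar; lra.
rewrite Rmult_1_r. apply G_lip.
Qed.

Lemma Phi_tail x : 0 <= x -> 0 <= 1 - Phi x <= gs x.
Proof.
intros Hx. rewrite Phi_G. assert (Hs := S2_pos). assert (Hg := G_ge0 x Hx).
assert (Hb := G_sq_bound x). assert (Hp := PI2_3_2).
assert (SS : S2 * S2 = PI / 2) by (unfold S2; apply sqrt_sqrt; lra).
assert (E : 1 - (/ 2 + G x / (2 * S2)) = (S2 - G x) / (2 * S2)) by (field; lra).
rewrite E. assert (Hgs := gs_pos x).
assert (G x <= S2). { destruct (Rle_dec (G x) S2); auto. nra. }
split.
- unfold Rdiv. apply Rmult_le_pos; [lra|]. apply Rlt_le, Rinv_0_lt_compat; lra.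
- apply Rle_trans with (2 * gs x / (2 * S2 * S2)).
  + unfold Rdiv. replace (S2 - G x) with ((PI/2 - G x ^ 2) * / (S2 + G x)).
    2:{ rewrite <- SS. field. lra. }
    apply Rle_trans with (2 * gs x * / S2 * / (2 * S2)).
    * apply Rmult_le_compat_r. apply Rlt_le, Rinv_0_lt_compat; lra.
      apply Rmult_le_compat; try lra. apply Rlt_le, Rinv_0_lt_compat; lra.
      apply Rinv_le_contravar; lra.
    * right. field. lra.
  + rewrite Rmult_assoc, SS. unfold Rdiv. apply Rle_trans with (2 * gs x * / 2).
    apply Rmult_le_compat_l; [lra|]. apply Rinv_le_contravar; lra. lra.
Qed.

Lemma Phi_range z : 0 <= Phi z <= 1.
Proof.
destruct (Rle_dec 0 z) as [h|h].
- assert (Ht := Phi_tail z h). assert (Hm := Phi_le 0 z h). rewrite Phi0 in Hm. lra.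
- assert (h' : 0 <= - z) by lra. assert (Ht := Phi_tail _ h').
  assert (Hm := Phi_le 0 _ h'). rewrite Phi0 in Hm. rewrite Phi_sym in Ht, Hm. lra.
Qed.

Lemma gs_small x : 1 <= x -> gs x <= 2 / x.
Proof.
intros h. unfold gs. replace (- (x ^ 2) / 2) with (- (x ^ 2 / 2)) by field.
rewrite exp_Ropp. assert (E := exp_ineq1_le (x ^ 2 / 2)).
replace (2 / x) with (/ (x / 2)) by (field; lra).
apply Rinv_le_contravar. lra. simpl in *. nra.
Qed.

Lemma lip_cont (f : R -> R) z : (forall a b, Rabs (f b - f a) <= Rabs (b - a)) -> continuity_pt f z.
Proof.
intros Hl. unfold continuity_pt, continue_in, limit1_in, limit_in. intros eps Heps.
exists eps. split; auto. intros y [_ Hy]. simpl in *. unfold R_dist in *.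
eapply Rle_lt_trans; [apply Hl| auto].
Qed.

Lemma Phi_cont z : continuous Phi z.
Proof. apply (proj1 (continuity_pt_filterlim _ _)). apply lip_cont. intros; apply Phi_lip. Qed.

Lemma dis_unique f a b l : Defs.is_RInt f a b l -> l = RInt f a b.
Proof. intros [pr Hpr]. rewrite <- Hpr. symmetry. apply RInt_Reals. Qed.

Lemma dis_exists f a b : (forall x, continuous f x) -> Defs.is_RInt f a b (RInt f a b).
Proof.
intros Hc. assert (He := exRc f a b Hc).
exists (ex_RInt_Reals_0 _ _ _ He). symmetry. apply RInt_Reals.
Qed.

Lemma exp_small eps : 0 < eps -> exists X, 0 < X /\ forall x, X <= x -> exp (- x) < eps.
Proof.
intros He. exists (/ eps). split. apply Rinv_0_lt_compat; auto.
intros x Hx. rewrite exp_Ropp. assert (E := exp_ineq1_le x).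
assert (0 < / eps) by (apply Rinv_0_lt_compat; auto).
apply Rle_lt_trans with (/ (1 + x)). apply Rinv_le_contravar; lra.
rewrite <- (Rinv_inv eps). apply Rinv_lt_contravar. nra. lra.
Qed.

Definition B0 (nu : nat) := 2 * INR nu.

Lemma B0_ge0 nu : 0 <= B0 nu.
Proof. unfold B0. assert (h := pos_INR nu). lra. Qed.

Lemma w_cont nu s : continuous (chi_weight nu) s.
Proof. apply (@ex_derive_continuous R_AbsRing R_NormedModule). unfold chi_weight. auto_derive. easy. Qed.

Lemma w_nonneg nu s : 0 <= s -> 0 <= chi_weight nu s.
Proof. intros h. unfold chi_weight. apply Rmult_le_pos. apply pow_le; auto. apply Rlt_le, exp_pos. Qed.

Lemma w_pos nu s : 0 < s -> 0 < chi_weight nu s.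
Proof. intros h. unfold chi_weight. apply Rmult_lt_0_compat. apply pow_lt; auto. apply exp_pos. Qed.

Lemma w_le1 nu s : 0 <= s <= 1 -> chi_weight nu s <= 1.
Proof.
intros h. unfold chi_weight. rewrite <- (Rmult_1_l 1).
apply Rmult_le_compat. apply pow_le; lra. apply Rlt_le, exp_pos.
rewrite <- (pow1 (nu - 1)). apply pow_incr; lra. apply (gs_le1 s).
Qed.

Lemma exp_pow_n s k : exp s ^ k = exp (INR k * s).
Proof.
induction k. simpl. rewrite Rmult_0_l, exp_0. reflexivity.
rewrite S_INR. simpl. rewrite IHk. rewrite <- exp_plus. f_equal. ring.
Qed.

Lemma w_tail nu s : (1 <= nu)%nat -> B0 nu <= s -> chi_weight nu s <= exp (- s).
Proof.
intros Hn Hs. unfold chi_weight, B0 in *.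
assert (Hk : INR (nu - 1) = INR nu - 1) by (rewrite minus_INR; simpl; auto; lra).
assert (h1 := pos_INR nu). assert (h2 : 1 <= INR nu) by (apply (le_INR 1); auto).
apply Rle_trans with (exp s ^ (nu - 1) * exp (- s ^ 2 / 2)).
- apply Rmult_le_compat_r. apply Rlt_le, exp_pos. apply pow_incr. split. lra.
  assert (E := exp_ineq1_le s). lra.
- rewrite exp_pow_n. rewrite <- exp_plus. apply exp_le. rewrite Hk. simpl. nra.
Qed.

Lemma RInt_exp_tail a b : a <= b -> RInt (fun s => exp (- s)) a b <= exp (- a).
Proof.
intros h.
assert (D : forall x, Rmin a b <= x <= Rmax a b -> is_derive (fun s => - exp (- s)) x (exp (- x))).
{ intros x _. auto_derive. easy. ring. }
assert (C : forall x, Rmin a b <= x <= Rmax a b -> continuous (fun s => exp (- s)) x).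
{ intros x _. apply (@ex_derive_continuous R_AbsRing R_NormedModule). auto_derive. easy. }
rewrite (is_RInt_unique _ _ _ _ (@is_RInt_derive R_CompleteNormedModule _ _ a b D C)).
unfold minus, plus, opp; simpl. assert (Hp := exp_pos (- b)). lra.
Qed.

Lemma expm_cont : forall x, continuous (fun s => exp (- s)) x.
Proof. intros x. apply (@ex_derive_continuous R_AbsRing R_NormedModule). auto_derive. easy. Qed.

Lemma seg_bound nu f M b b' : (1 <= nu)%nat -> (forall x, continuous f x) -> 0 <= M ->
  (forall s, 0 <= s -> Rabs (f s) <= M * chi_weight nu s) ->
  B0 nu <= b -> b <= b' -> Rabs (RInt f 0 b' - RInt f 0 b) <= M * exp (- b).
Proof.
intros Hn Hc HM Hb Hb0 Hbb.
assert (E : RInt f 0 b' - RInt f 0 b = RInt f b b').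
{ rewrite <- (@RInt_Chasles R_CompleteNormedModule f 0 b b'); try apply exRc, Hc.
  unfold plus; simpl. ring. }
rewrite E.
assert (Hg : RInt (fun s => M * exp (- s)) b b' <= M * exp (- b)).
{ rewrite (RInt_ext _ (fun s => scal M (exp (- s)))) by (intros; reflexivity).
  rewrite (@RInt_scal R_CompleteNormedModule). 2: apply exRc, expm_cont.
  unfold scal; simpl; unfold mult; simpl. apply Rmult_le_compat_l; auto. apply RInt_exp_tail; auto. }
assert (Hcg : forall x, continuous (fun s => M * exp (- s)) x).
{ intros x. apply (@ex_derive_continuous R_AbsRing R_NormedModule). auto_derive. easy. }
assert (Hpt : forall s, b < s < b' -> Rabs (f s) <= M * exp (- s)).
{ intros s Hs. eapply Rle_trans. apply Hb. assert (h := B0_ge0 nu). lra.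
  apply Rmult_le_compat_l; auto. apply w_tail; auto. lra. }
apply Rabs_le. split.
- assert (RInt (fun s => - (M * exp (- s))) b b' <= RInt f b b').
  { apply RInt_le; auto. apply exRc. intros x. apply (@ex_derive_continuous R_AbsRing R_NormedModule). auto_derive. easy.
    apply exRc, Hc. intros s Hs. assert (h := Hpt s Hs). apply Rabs_le_between in h. lra. }
  rewrite (RInt_ext _ (fun s => opp (M * exp (- s)))) in H by (intros; reflexivity).
  rewrite (@RInt_opp R_CompleteNormedModule) in H. 2: apply exRc, Hcg.
  unfold opp in H; simpl in H. lra.
- apply Rle_trans with (RInt (fun s => M * exp (- s)) b b'); auto.
  apply RInt_le; auto. apply exRc, Hc. apply exRc, Hcg.
  intros s Hs. assert (h := Hpt s Hs). apply Rabs_le_between in h. lra.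
Qed.

Lemma small_nat eps : 0 < eps -> exists N : nat, forall x, INR N <= x -> exp (- x) < eps.
Proof.
intros He. destruct (exp_small eps He) as [X [HX HX']].
destruct (archimed_cor1 (/ X)) as [N [HN HN0]]. apply Rinv_0_lt_compat; auto.
exists N. intros x Hx. apply HX'.
assert (0 < INR N) by (apply lt_0_INR; auto).
apply Rlt_le. eapply Rlt_le_trans; [|apply Hx].
rewrite <- (Rinv_inv (INR N)). rewrite <- (Rinv_inv X).
apply Rinv_lt_contravar; auto. apply Rmult_lt_0_compat; apply Rinv_0_lt_compat; auto.
Qed.

Lemma C1 nu f M : (1 <= nu)%nat -> (forall x, continuous f x) -> 0 <= M ->
  (forall s, 0 <= s -> Rabs (f s) <= M * chi_weight nu s) ->
  forall b, B0 nu <= b -> Rabs (RInt f 0 b - RInt_0_infty f) <= M * exp (- b).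
Proof.
intros Hn Hc HM Hb.
set (u := fun n : nat => RInt f 0 (B0 nu + INR n)).
assert (Hu : forall n m, (n <= m)%nat -> Rabs (u m - u n) <= M * exp (- (B0 nu + INR n))).
{ intros n m Hnm. unfold u. apply (seg_bound nu); auto. assert (h := pos_INR n); lra.
  apply Rplus_le_compat_l, le_INR; auto. }
assert (Cu : Cauchy_crit u).
{ intros eps He.
  destruct (Rle_lt_dec M 0) as [HM0|HM0].
  - exists 0%nat. intros n m _ _. unfold Rdist.
    destruct (Nat.le_ge_cases n m) as [h|h].
    + rewrite Rabs_minus_sym. eapply Rle_lt_trans. apply Hu; auto.
      replace M with 0 by lra. lra.
    + eapply Rle_lt_trans. apply Hu; auto. replace M with 0 by lra. lra.
  - destruct (small_nat (eps / M)) as [N HN]. apply Rdiv_lt_0_compat; auto.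
    exists N. intros n m Hn' Hm'. unfold Rdist.
    assert (K : forall k, (N <= k)%nat -> M * exp (- (B0 nu + INR k)) < eps).
    { intros k Hk. assert (h := HN (B0 nu + INR k)).
      assert (INR N <= B0 nu + INR k). { assert (h' := B0_ge0 nu). assert (INR N <= INR k) by (apply le_INR; auto). lra. }
      specialize (h H). apply Rmult_lt_compat_l with (r := M) in h; auto.
      replace (M * (eps / M)) with eps in h by (field; lra). lra. }
    destruct (Nat.le_ge_cases n m) as [h|h].
    + rewrite Rabs_minus_sym. eapply Rle_lt_trans. apply Hu; auto. apply K; auto.
    + eapply Rle_lt_trans. apply Hu; auto. apply K; auto. }
destruct (Rcomplete.R_complete u Cu) as [L HL].
assert (Hfin : forall b, B0 nu <= b -> Rabs (RInt f 0 b - L) <= M * exp (- b)).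
{ intros b Hb0.
  destruct (Rle_dec (Rabs (RInt f 0 b - L)) (M * exp (- b))) as [ok|ko]; auto. exfalso.
  set (e := Rabs (RInt f 0 b - L) - M * exp (- b)).
  assert (He : 0 < e) by (unfold e; lra).
  destruct (HL e He) as [N1 HN1].
  destruct (archimed_cor1 1) as [N2 _]. lra.
  destruct (INR_unbounded b) as [N3 HN3].
  set (k := (N1 + N3)%nat).
  assert (h1 := HN1 k ltac:(unfold k; lia)). unfold R_dist in h1.
  assert (h2 : Rabs (u k - RInt f 0 b) <= M * exp (- b)).
  { unfold u. apply (seg_bound nu); auto.
    assert (INR N3 <= INR k) by (apply le_INR; unfold k; lia). assert (h' := B0_ge0 nu). lra. }
  assert (Rabs (RInt f 0 b - L) <= Rabs (u k - RInt f 0 b) + Rabs (u k - L)).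
  { replace (RInt f 0 b - L) with (- (u k - RInt f 0 b) + (u k - L)) by ring.
    eapply Rle_trans. apply Rabs_triang. rewrite Rabs_Ropp. lra. }
  unfold e in *. lra. }
assert (Hinf : Defs.is_RInt_0_infty f L).
{ intros eps He.
  destruct (Rle_lt_dec M 0) as [HM0|HM0].
  - exists (B0 nu). intros b Hb0. exists (RInt f 0 b). split. apply dis_exists; auto.
    eapply Rle_lt_trans. apply Hfin; auto. replace M with 0 by lra. lra.
  - destruct (small_nat (eps / M)) as [N HN]. apply Rdiv_lt_0_compat; auto.
    exists (Rmax (B0 nu) (INR N)). intros b Hb0. exists (RInt f 0 b). split. apply dis_exists; auto.
    eapply Rle_lt_trans. apply Hfin. eapply Rle_trans; [apply Rmax_l|eauto].
    assert (h := HN b ltac:(eapply Rle_trans; [apply Rmax_r|eauto])).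
    apply Rmult_lt_compat_l with (r := M) in h; auto.
    replace (M * (eps / M)) with eps in h by (field; lra). lra. }
assert (Eq : RInt_0_infty f = L).
{ unfold RInt_0_infty.
  assert (H := epsilon_spec (inhabits 0) (fun l => Defs.is_RInt_0_infty f l) (ex_intro _ _ Hinf)).
  set (L' := epsilon (inhabits 0) (fun l => Defs.is_RInt_0_infty f l)) in *.
  destruct (Req_dec L' L) as [ok|ko]; auto. exfalso.
  assert (He : 0 < Rabs (L' - L) / 2). { apply Rdiv_lt_0_compat; [|lra]. apply Rabs_pos_lt. lra. }
  destruct (H (Rabs (L' - L) / 2) He) as [M1 HM1].
  destruct (Hinf (Rabs (L' - L) / 2) He) as [M2 HM2].
  destruct (HM1 (Rmax M1 M2) (Rmax_l _ _)) as [l1 [Hl1 Hl1']].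
  destruct (HM2 (Rmax M1 M2) (Rmax_r _ _)) as [l2 [Hl2 Hl2']].
  apply dis_unique in Hl1. apply dis_unique in Hl2. subst l1 l2.
  assert (Rabs (L' - L) <= Rabs (RInt f 0 (Rmax M1 M2) - L') + Rabs (RInt f 0 (Rmax M1 M2) - L)).
  { replace (L' - L) with (- (RInt f 0 (Rmax M1 M2) - L') + (RInt f 0 (Rmax M1 M2) - L)) by ring.
    eapply Rle_trans. apply Rabs_triang. rewrite Rabs_Ropp. lra. }
  lra. }
rewrite Eq. exact Hfin.
Qed.

Lemma cmult (f g : R -> R) x : continuous f x -> continuous g x -> continuous (fun y => f y * g y) x.
Proof. intros; apply (@continuous_mult R_UniformSpace R_AbsRing); auto. Qed.
Lemma cplus (f g : R -> R) x : continuous f x -> continuous g x -> continuous (fun y => f y + g y) x.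
Proof. intros; apply (@continuous_plus R_UniformSpace R_AbsRing R_NormedModule); auto. Qed.
Lemma copp (f : R -> R) x : continuous f x -> continuous (fun y => - f y) x.
Proof. intros; apply (@continuous_opp R_UniformSpace R_AbsRing R_NormedModule); auto. Qed.
Lemma cconst (c : R) x : continuous (fun _ : R => c) x.
Proof. apply (@continuous_const R_UniformSpace R_UniformSpace). Qed.
Lemma cPhiL a b x : continuous (fun s => Phi (a * s + b)) x.
Proof.
apply (@continuous_comp R_UniformSpace R_UniformSpace R_UniformSpace (fun s => a * s + b) Phi).
apply (@ex_derive_continuous R_AbsRing R_NormedModule). auto_derive. easy. apply Phi_cont.
Qed.

Lemma zero_lemma x C B : 0 <= C -> (forall b, B <= b -> Rabs x <= C * exp (- b)) -> x = 0.
Proof.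
intros HC Hb. destruct (Req_dec x 0) as [ok|ko]; auto. exfalso.
assert (Hx : 0 < Rabs x) by (apply Rabs_pos_lt; auto).
destruct (Rle_lt_dec C 0).
- assert (h := Hb B (Rle_refl _)). assert (C = 0) by lra. subst. lra.
- destruct (exp_small (Rabs x / C)) as [X [_ HX]]. apply Rdiv_lt_0_compat; auto.
  assert (h1 := Hb (Rmax B X) (Rmax_l _ _)). assert (h2 := HX (Rmax B X) (Rmax_r _ _)).
  apply Rmult_lt_compat_l with (r := C) in h2; auto.
  replace (C * (Rabs x / C)) with (Rabs x) in h2 by (field; lra). lra.
Qed.

Lemma le_lemma x y C B : 0 <= C -> (forall b, B <= b -> x <= y + C * exp (- b)) -> x <= y.
Proof.
intros HC Hb. destruct (Rle_dec x y) as [ok|ko]; auto. exfalso.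
destruct (Rle_lt_dec C 0).
- assert (h := Hb B (Rle_refl _)). assert (C = 0) by lra. subst. lra.
- destruct (exp_small ((x - y) / C)) as [X [_ HX]]. apply Rdiv_lt_0_compat; lra.
  assert (h1 := Hb (Rmax B X) (Rmax_l _ _)). assert (h2 := HX (Rmax B X) (Rmax_r _ _)).
  apply Rmult_lt_compat_l with (r := C) in h2; auto.
  replace (C * ((x - y) / C)) with (x - y) in h2 by (field; lra). lra.
Qed.

Definition good nu f := (forall x, continuous f x) /\ exists M, 0 <= M /\
  forall s, 0 <= s -> Rabs (f s) <= M * chi_weight nu s.

Notation Iinf := RInt_0_infty.

Lemma I_lin nu a b f g : (1 <= nu)%nat -> good nu f -> good nu g ->
  Iinf (fun s => a * f s + b * g s) = a * Iinf f + b * Iinf g.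
Proof.
intros Hn [Cf [Mf [HMf Bf]]] [Cg [Mg [HMg Bg]]].
set (M := Rabs a * Mf + Rabs b * Mg).
assert (HM : 0 <= M) by (unfold M; assert (h1 := Rabs_pos a); assert (h2 := Rabs_pos b); nra).
assert (Ch : forall x, continuous (fun s => a * f s + b * g s) x).
{ intros; apply cplus; apply cmult; auto; apply cconst. }
assert (Bh : forall s, 0 <= s -> Rabs (a * f s + b * g s) <= M * chi_weight nu s).
{ intros s Hs. eapply Rle_trans. apply Rabs_triang. rewrite !Rabs_mult. unfold M.
  assert (h1 := Bf s Hs). assert (h2 := Bg s Hs). assert (h3 := Rabs_pos a). assert (h4 := Rabs_pos b).
  assert (Rabs a * Rabs (f s) <= Rabs a * (Mf * chi_weight nu s)) by (apply Rmult_le_compat_l; auto).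
  assert (Rabs b * Rabs (g s) <= Rabs b * (Mg * chi_weight nu s)) by (apply Rmult_le_compat_l; auto).
  lra. }
apply Rminus_diag_uniq.
apply (zero_lemma _ (M + M) (B0 nu)). lra.
intros b' Hb'.
assert (E1 := C1 nu _ M Hn Ch HM Bh b' Hb').
assert (E2 := C1 nu _ Mf Hn Cf HMf Bf b' Hb').
assert (E3 := C1 nu _ Mg Hn Cg HMg Bg b' Hb').
rewrite (@RInt_plus R_CompleteNormedModule (fun s => a * f s) (fun s => b * g s)) in E1;
  try (apply exRc; intros; apply cmult; auto; apply cconst).
rewrite (RInt_ext (fun s => a * f s) (fun s => scal a (f s))) in E1 by (intros; reflexivity).
rewrite (RInt_ext (fun s => b * g s) (fun s => scal b (g s))) in E1 by (intros; reflexivity).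
rewrite !(@RInt_scal R_CompleteNormedModule) in E1; try (apply exRc; auto).
unfold plus, scal in E1; simpl in E1; unfold mult in E1; simpl in E1.
set (Rf := RInt f 0 b') in *. set (Rg := RInt g 0 b') in *.
set (Ih := Iinf (fun s => a * f s + b * g s)). fold Ih in E1.
assert (K1 : Rabs (a * (Rf - Iinf f)) <= Rabs a * (Mf * exp (- b'))).
{ rewrite Rabs_mult. apply Rmult_le_compat_l; auto. apply Rabs_pos. }
assert (K2 : Rabs (b * (Rg - Iinf g)) <= Rabs b * (Mg * exp (- b'))).
{ rewrite Rabs_mult. apply Rmult_le_compat_l; auto. apply Rabs_pos. }
replace (Ih - (a * Iinf f + b * Iinf g)) with (- ((a * Rf + b * Rg) - Ih) + (a * (Rf - Iinf f) + b * (Rg - Iinf g))) by ring.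
eapply Rle_trans. apply Rabs_triang. rewrite Rabs_Ropp.
assert (Rabs (a * (Rf - Iinf f) + b * (Rg - Iinf g)) <= Rabs a * (Mf * exp (- b')) + Rabs b * (Mg * exp (- b'))).
{ eapply Rle_trans. apply Rabs_triang. lra. }
assert (M * exp (- b') = Rabs a * (Mf * exp (- b')) + Rabs b * (Mg * exp (- b'))) by (unfold M; ring).
assert ((M + M) * exp (- b') = M * exp (- b') + M * exp (- b')) by ring.
assert (0 <= M * exp (- b')) by (apply Rmult_le_pos; auto; apply Rlt_le, exp_pos).
lra.
Qed.

Lemma I_ge_partial nu f b : (1 <= nu)%nat -> good nu f -> (forall s, 0 <= s -> 0 <= f s) ->
  0 <= b -> RInt f 0 b <= Iinf f.
Proof.
intros Hn [Cf [M [HM Bf]]] Hpos Hb.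
apply (le_lemma _ _ M (Rmax b (B0 nu))); auto.
intros b' Hb'.
assert (h1 : b <= b') by (eapply Rle_trans; [apply Rmax_l|eauto]).
assert (h2 : B0 nu <= b') by (eapply Rle_trans; [apply Rmax_r|eauto]).
assert (E := C1 nu f M Hn Cf HM Bf b' h2).
assert (RInt f 0 b <= RInt f 0 b').
{ rewrite <- (@RInt_Chasles R_CompleteNormedModule f 0 b b'); try apply exRc, Cf.
  unfold plus; simpl. assert (0 <= RInt f b b'); [|lra].
  apply RInt_ge_0; auto. apply exRc, Cf. intros; apply Hpos; lra. }
apply Rabs_le_between in E. lra.
Qed.

Lemma good_w nu : good nu (chi_weight nu).
Proof.
split. apply w_cont. exists 1. split. lra. intros s Hs.
rewrite Rabs_right. lra. apply Rle_ge, w_nonneg; auto.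
Qed.

Lemma K_pos nu : (1 <= nu)%nat -> 0 < Iinf (chi_weight nu).
Proof.
intros Hn. apply Rlt_le_trans with (RInt (chi_weight nu) 0 1).
- apply RInt_gt_0. lra. intros; apply w_pos; lra. intros; apply w_cont.
- apply (I_ge_partial nu); auto. apply good_w. apply w_nonneg. lra.
Qed.

Lemma I_bound nu f a B eps : (1 <= nu)%nat -> (forall x, continuous f x) ->
  (forall s, 0 <= s -> Rabs (f s) <= chi_weight nu s) ->
  0 <= a <= 1 -> a <= B -> B0 nu <= B -> 0 <= eps ->
  (forall s, a <= s <= B -> Rabs (f s) <= eps * chi_weight nu s) ->
  Rabs (Iinf f) <= a + eps * Iinf (chi_weight nu) + exp (- B).
Proof.
intros Hn Cf Bf Ha HaB HB He Hs.
assert (Bf' : forall s, 0 <= s -> Rabs (f s) <= 1 * chi_weight nu s) by (intros; rewrite Rmult_1_l; auto).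
assert (E := C1 nu f 1 Hn Cf ltac:(lra) Bf' B HB). rewrite Rmult_1_l in E.
rewrite <- (@RInt_Chasles R_CompleteNormedModule f 0 a B) in E; try apply exRc, Cf.
unfold plus in E; simpl in E.
assert (E1 : Rabs (RInt f 0 a) <= (a - 0) * 1).
{ apply abs_RInt_le_const. lra. apply exRc, Cf. intros t Ht.
  eapply Rle_trans. apply Bf. lra. apply w_le1. lra. }
assert (Kw : RInt (chi_weight nu) a B <= Iinf (chi_weight nu)).
{ apply Rle_trans with (RInt (chi_weight nu) 0 B).
  - rewrite <- (@RInt_Chasles R_CompleteNormedModule (chi_weight nu) 0 a B); try apply exRc, w_cont.
    unfold plus; simpl. assert (0 <= RInt (chi_weight nu) 0 a); [|lra].
    apply RInt_ge_0. lra. apply exRc, w_cont. intros; apply w_nonneg; lra.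
  - apply (I_ge_partial nu); auto. apply good_w. apply w_nonneg. lra. }
assert (Cw : forall x, continuous (fun s => eps * chi_weight nu s) x).
{ intros; apply cmult. apply cconst. apply w_cont. }
assert (Ew : RInt (fun s => eps * chi_weight nu s) a B = eps * RInt (chi_weight nu) a B).
{ rewrite (RInt_ext _ (fun s => scal eps (chi_weight nu s))) by (intros; reflexivity).
  rewrite (@RInt_scal R_CompleteNormedModule). reflexivity. apply exRc, w_cont. }
assert (E2 : Rabs (RInt f a B) <= eps * RInt (chi_weight nu) a B).
{ rewrite <- Ew. apply Rabs_le. split.
  - assert (RInt (fun s => - (eps * chi_weight nu s)) a B <= RInt f a B).
    { apply RInt_le; auto. apply exRc. intros; apply copp, Cw.
      apply exRc, Cf. intros s Hs'. assert (h := Hs s ltac:(lra)). apply Rabs_le_between in h. lra. }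
    rewrite (RInt_ext _ (fun s => opp (eps * chi_weight nu s))) in H by (intros; reflexivity).
    rewrite (@RInt_opp R_CompleteNormedModule) in H. 2: apply exRc, Cw.
    unfold opp in H; simpl in H. lra.
  - apply RInt_le; auto. apply exRc, Cf. apply exRc, Cw.
    intros s Hs'. assert (h := Hs s ltac:(lra)). apply Rabs_le_between in h. lra. }
assert (eps * RInt (chi_weight nu) a B <= eps * Iinf (chi_weight nu)) by (apply Rmult_le_compat_l; auto).
apply Rabs_le_between in E. apply Rabs_le_between in E1. apply Rabs_le_between in E2.
apply Rabs_le. lra.
Qed.

Lemma I_pos nu f : (1 <= nu)%nat -> good nu f -> (forall s, 0 <= s -> 0 <= f s) ->
  (forall s, 0 < s -> 0 < f s) -> 0 < Iinf f.
Proof.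
intros Hn Hg H0 Hp. apply Rlt_le_trans with (RInt f 0 1).
- apply RInt_gt_0. lra. intros; apply Hp; lra. intros; apply (proj1 Hg).
- apply (I_ge_partial nu); auto. lra.
Qed.

Lemma cPhiF (g : R -> R) x : (forall y, ex_derive g y) -> continuous (fun s => Phi (g s)) x.
Proof.
intros Hg. apply (@continuous_comp R_UniformSpace R_UniformSpace R_UniformSpace g Phi).
apply (@ex_derive_continuous R_AbsRing R_NormedModule). apply Hg. apply Phi_cont.
Qed.

Definition Fi nu d x := fun s => Phi (x * s / sqrt (INR nu) - d) * chi_weight nu s.

Lemma Fi_cont nu d x : forall y, continuous (Fi nu d x) y.
Proof. intros y. unfold Fi. apply cmult. apply cPhiF. intros; auto_derive; easy. apply w_cont. Qed.

Lemma Fi_bound nu d x : forall s, 0 <= s -> Rabs (Fi nu d x s) <= chi_weight nu s.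
Proof.
intros s Hs. unfold Fi. rewrite Rabs_mult. rewrite (Rabs_right (chi_weight nu s)).
2: apply Rle_ge, w_nonneg; auto. assert (h := Phi_range (x * s / sqrt (INR nu) - d)).
rewrite Rabs_right by lra. rewrite <- (Rmult_1_l (chi_weight nu s)) at 2.
apply Rmult_le_compat_r. apply w_nonneg; auto. lra.
Qed.

Lemma Fi_good nu d x : good nu (Fi nu d x).
Proof. split. apply Fi_cont. exists 1. split. lra. intros; rewrite Rmult_1_l; apply Fi_bound; auto. Qed.

Lemma Fnct_Fi nu d x : Fnct nu d x = Iinf (Fi nu d x) / Iinf (chi_weight nu).
Proof. reflexivity. Qed.

Lemma Fdiff nu d x d' x' : (1 <= nu)%nat ->
  Fnct nu d x - Fnct nu d' x' =
  Iinf (fun s => (Phi (x * s / sqrt (INR nu) - d) - Phi (x' * s / sqrt (INR nu) - d')) * chi_weight nu s)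
  / Iinf (chi_weight nu).
Proof.
intros Hn. rewrite !Fnct_Fi. assert (K := K_pos nu Hn).
replace (fun s => (Phi (x * s / sqrt (INR nu) - d) - Phi (x' * s / sqrt (INR nu) - d')) * chi_weight nu s)
  with (fun s => 1 * Fi nu d x s + (-1) * Fi nu d' x' s).
2:{ apply functional_extensionality. intros s. unfold Fi. ring. }
rewrite (I_lin nu); auto; try apply Fi_good. field. lra.
Qed.

Lemma Fcompl nu d x : (1 <= nu)%nat ->
  1 - Fnct nu d x =
  Iinf (fun s => (1 - Phi (x * s / sqrt (INR nu) - d)) * chi_weight nu s) / Iinf (chi_weight nu).
Proof.
intros Hn. rewrite !Fnct_Fi. assert (K := K_pos nu Hn).
replace (fun s => (1 - Phi (x * s / sqrt (INR nu) - d)) * chi_weight nu s)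
  with (fun s => 1 * chi_weight nu s + (-1) * Fi nu d x s).
2:{ apply functional_extensionality. intros s. unfold Fi. ring. }
rewrite (I_lin nu); auto; try apply Fi_good; try apply good_w. field. lra.
Qed.

Lemma diff_cont nu d x d' x' : forall y,
  continuous (fun s => (Phi (x * s / sqrt (INR nu) - d) - Phi (x' * s / sqrt (INR nu) - d')) * chi_weight nu s) y.
Proof.
intros y. apply cmult; [|apply w_cont]. apply cplus. apply cPhiF. intros; auto_derive; easy.
apply copp. apply cPhiF. intros; auto_derive; easy.
Qed.

Lemma diff_bound nu d x d' x' : forall s, 0 <= s ->
  Rabs ((Phi (x * s / sqrt (INR nu) - d) - Phi (x' * s / sqrt (INR nu) - d')) * chi_weight nu s) <= chi_weight nu s.
Proof.
intros s Hs. rewrite Rabs_mult. rewrite (Rabs_right (chi_weight nu s)).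
2: apply Rle_ge, w_nonneg; auto.
assert (h1 := Phi_range (x * s / sqrt (INR nu) - d)). assert (h2 := Phi_range (x' * s / sqrt (INR nu) - d')).
rewrite <- (Rmult_1_l (chi_weight nu s)) at 2.
apply Rmult_le_compat_r. apply w_nonneg; auto. apply Rabs_le. lra.
Qed.

Lemma F_lip_d nu x d d' : (1 <= nu)%nat -> Rabs (Fnct nu d x - Fnct nu d' x) <= Rabs (d - d').
Proof.
intros Hn. rewrite Fdiff; auto. assert (K := K_pos nu Hn).
set (f := fun s => (Phi (x * s / sqrt (INR nu) - d) - Phi (x * s / sqrt (INR nu) - d')) * chi_weight nu s).
assert (Hb : Rabs (Iinf f) <= Rabs (d - d') * Iinf (chi_weight nu)).
{ apply (le_lemma _ _ 1 (B0 nu)). lra. intros B HB.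
  assert (Hp : forall s, 0 <= s <= B -> Rabs (f s) <= Rabs (d - d') * chi_weight nu s).
  { intros s Hs. unfold f. rewrite Rabs_mult. rewrite (Rabs_right (chi_weight nu s)).
    2: apply Rle_ge, w_nonneg; lra. apply Rmult_le_compat_r. apply w_nonneg; lra.
    eapply Rle_trans. apply Phi_lip. rewrite Rabs_minus_sym. right. f_equal. ring. }
  assert (h := I_bound nu f 0 B (Rabs (d - d')) Hn (diff_cont nu d x d' x) (diff_bound nu d x d' x)
     ltac:(lra) ltac:(assert (h' := B0_ge0 nu); lra) HB (Rabs_pos _) Hp).
  lra. }
unfold Rdiv. rewrite Rabs_mult. rewrite (Rabs_right (/ Iinf (chi_weight nu))). 2: apply Rle_ge, Rlt_le, Rinv_0_lt_compat; auto.
apply Rmult_le_reg_r with (Iinf (chi_weight nu)); auto.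
rewrite Rmult_assoc, Rinv_l by lra. lra.
Qed.

Lemma sqrt_nu_pos nu : (1 <= nu)%nat -> 0 < sqrt (INR nu).
Proof. intros Hn. apply sqrt_lt_R0. apply lt_0_INR. lia. Qed.

Lemma F_dec_d nu x d d' : (1 <= nu)%nat -> d < d' -> Fnct nu d' x < Fnct nu d x.
Proof.
intros Hn Hd. apply Rminus_gt. rewrite Fdiff; auto. assert (K := K_pos nu Hn).
apply Rdiv_lt_0_compat; auto. apply (I_pos nu).
- auto.
- split. apply diff_cont. exists 1. split. lra. intros. rewrite Rmult_1_l. apply diff_bound; auto.
- intros s Hs. apply Rmult_le_pos. assert (hh0 := Phi_strict (x * s / sqrt (INR nu) - d') (x * s / sqrt (INR nu) - d) ltac:(lra)). lra.
  apply w_nonneg; auto.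
- intros s Hs. apply Rmult_lt_0_compat. assert (hh0 := Phi_strict (x * s / sqrt (INR nu) - d') (x * s / sqrt (INR nu) - d) ltac:(lra)). lra.
  apply w_pos; auto.
Qed.

Lemma F_inc_x nu x x' : (1 <= nu)%nat -> x < x' -> Fnct nu 0 x < Fnct nu 0 x'.
Proof.
intros Hn Hx. apply Rminus_gt. rewrite Fdiff; auto. assert (K := K_pos nu Hn).
assert (Hr := sqrt_nu_pos nu Hn).
apply Rdiv_lt_0_compat; auto. apply (I_pos nu).
- auto.
- split. apply diff_cont. exists 1. split. lra. intros. rewrite Rmult_1_l. apply diff_bound; auto.
- intros s Hs. apply Rmult_le_pos; [|apply w_nonneg; auto].
  assert (x * s / sqrt (INR nu) - 0 <= x' * s / sqrt (INR nu) - 0).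
  { unfold Rdiv. apply Rplus_le_compat_r. apply Rmult_le_compat_r. left; apply Rinv_0_lt_compat; auto. nra. }
  assert (hh0 := Phi_le _ _ H). lra.
- intros s Hs. apply Rmult_lt_0_compat; [|apply w_pos; auto].
  assert (x * s / sqrt (INR nu) - 0 < x' * s / sqrt (INR nu) - 0).
  { unfold Rdiv. apply Rplus_lt_compat_r. apply Rmult_lt_compat_r. apply Rinv_0_lt_compat; auto. nra. }
  assert (hh0 := Phi_strict _ _ H). lra.
Qed.

Lemma F_sym nu x : (1 <= nu)%nat -> Fnct nu 0 (- x) = 1 - Fnct nu 0 x.
Proof.
intros Hn. rewrite Fcompl; auto. rewrite Fnct_Fi. f_equal. f_equal.
apply functional_extensionality. intros s. unfold Fi. f_equal.
rewrite <- Phi_sym. f_equal. field. apply Rgt_not_eq, sqrt_nu_pos; auto.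
Qed.

Lemma phi_lo y : 1 <= y -> Phi (- y) <= 2 / y.
Proof. intros h. rewrite Phi_sym. assert (h1 := Phi_tail y ltac:(lra)). assert (h2 := gs_small y h). lra. Qed.

Lemma phi_hi y : 1 <= y -> 1 - Phi y <= 2 / y.
Proof. intros h. assert (h1 := Phi_tail y ltac:(lra)). assert (h2 := gs_small y h). lra. Qed.

Lemma Iinf_div_lt nu g eta : (1 <= nu)%nat -> 0 < eta ->
  Rabs (Iinf g) < eta * Iinf (chi_weight nu) -> Iinf g / Iinf (chi_weight nu) < eta.
Proof.
intros Hn He H. assert (K := K_pos nu Hn).
apply Rmult_lt_reg_r with (Iinf (chi_weight nu)); auto.
unfold Rdiv. rewrite Rmult_assoc, Rinv_l by lra. rewrite Rmult_1_r.
eapply Rle_lt_trans. apply Rle_abs. auto.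
Qed.

Lemma Iinf_div_lt2 nu g eta : (1 <= nu)%nat -> 0 < eta ->
  Rabs (Iinf g) < eta * Iinf (chi_weight nu) -> Rabs (Iinf g / Iinf (chi_weight nu)) < eta.
Proof.
intros Hn He H. assert (K := K_pos nu Hn).
unfold Rdiv. rewrite Rabs_mult. rewrite (Rabs_right (/ Iinf (chi_weight nu))).
2: apply Rle_ge, Rlt_le, Rinv_0_lt_compat; auto.
apply Rmult_lt_reg_r with (Iinf (chi_weight nu)); auto.
rewrite Rmult_assoc, Rinv_l by lra. rewrite Rmult_1_r. auto.
Qed.

Lemma F_small_d nu q eta : (1 <= nu)%nat -> 0 < eta -> exists d, Fnct nu d q < eta.
Proof.
intros Hn He. assert (K := K_pos nu Hn). assert (Hr := sqrt_nu_pos nu Hn).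
destruct (exp_small (eta * Iinf (chi_weight nu) / 2)) as [X [HX HX']].
{ apply Rdiv_lt_0_compat; [nra|lra]. }
set (B := Rmax (B0 nu) X). set (y := Rmax 1 (4 / eta)).
assert (Hy1 : 1 <= y) by apply Rmax_l.
assert (Hy2 : 2 / y <= eta / 2).
{ assert (4 / eta <= y) by apply Rmax_r. assert (0 < 4 / eta) by (apply Rdiv_lt_0_compat; lra).
  apply Rle_trans with (2 / (4 / eta)). unfold Rdiv. apply Rmult_le_compat_l. lra.
  apply Rinv_le_contravar; lra. right. field. lra. }
exists (Rabs q * B / sqrt (INR nu) + y).
rewrite Fnct_Fi. apply (Iinf_div_lt nu); auto.
assert (HB0 := B0_ge0 nu).
assert (HB : B0 nu <= B) by apply Rmax_l.
assert (Hp : forall s, 0 <= s <= B -> Rabs (Fi nu (Rabs q * B / sqrt (INR nu) + y) q s) <= eta / 2 * chi_weight nu s).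
{ intros s Hs. unfold Fi. rewrite Rabs_mult. rewrite (Rabs_right (chi_weight nu s)).
  2: apply Rle_ge, w_nonneg; lra. apply Rmult_le_compat_r. apply w_nonneg; lra.
  set (z := q * s / sqrt (INR nu) - (Rabs q * B / sqrt (INR nu) + y)).
  assert (Hz : z <= - y).
  { unfold z. assert (q * s <= Rabs q * B).
    { eapply Rle_trans. apply Rle_abs. rewrite Rabs_mult. rewrite (Rabs_right s) by lra.
      apply Rmult_le_compat_l. apply Rabs_pos. lra. }
    unfold Rdiv. assert (0 < / sqrt (INR nu)) by (apply Rinv_0_lt_compat; auto).
    assert (q * s * / sqrt (INR nu) <= Rabs q * B * / sqrt (INR nu)) by (apply Rmult_le_compat_r; lra).
    lra. }
  assert (h := Phi_range z). rewrite Rabs_right by lra.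
  assert (h2 := Phi_le _ _ Hz). assert (h3 := phi_lo y Hy1). lra. }
assert (h := I_bound nu _ 0 B (eta / 2) Hn (Fi_cont nu _ q) (Fi_bound nu _ q) ltac:(lra) ltac:(lra) HB ltac:(lra) Hp).
assert (h4 := HX' B (Rmax_r _ _)). lra.
Qed.

Lemma F_big_d nu q eta : (1 <= nu)%nat -> 0 < eta -> exists d, 1 - eta < Fnct nu d q.
Proof.
intros Hn He. assert (K := K_pos nu Hn). assert (Hr := sqrt_nu_pos nu Hn).
destruct (exp_small (eta * Iinf (chi_weight nu) / 2)) as [X [HX HX']].
{ apply Rdiv_lt_0_compat; [nra|lra]. }
set (B := Rmax (B0 nu) X). set (y := Rmax 1 (4 / eta)).
assert (Hy1 : 1 <= y) by apply Rmax_l.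
assert (Hy2 : 2 / y <= eta / 2).
{ assert (4 / eta <= y) by apply Rmax_r. assert (0 < 4 / eta) by (apply Rdiv_lt_0_compat; lra).
  apply Rle_trans with (2 / (4 / eta)). unfold Rdiv. apply Rmult_le_compat_l. lra.
  apply Rinv_le_contravar; lra. right. field. lra. }
set (d := - (Rabs q * B / sqrt (INR nu) + y)).
exists d.
cut (1 - Fnct nu d q < eta). lra.
rewrite Fcompl; auto. apply (Iinf_div_lt nu); auto.
assert (HB0 := B0_ge0 nu).
assert (HB : B0 nu <= B) by apply Rmax_l.
set (f := fun s => (1 - Phi (q * s / sqrt (INR nu) - d)) * chi_weight nu s).
assert (Cf : forall x, continuous f x).
{ intros x. unfold f. apply cmult; [|apply w_cont]. apply cplus. apply cconst. apply copp.
  apply cPhiF. intros; auto_derive; easy. }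
assert (Bf : forall s, 0 <= s -> Rabs (f s) <= chi_weight nu s).
{ intros s Hs. unfold f. rewrite Rabs_mult. rewrite (Rabs_right (chi_weight nu s)).
  2: apply Rle_ge, w_nonneg; lra. rewrite <- (Rmult_1_l (chi_weight nu s)) at 2.
  apply Rmult_le_compat_r. apply w_nonneg; lra. assert (h := Phi_range (q * s / sqrt (INR nu) - d)).
  apply Rabs_le. lra. }
assert (Hp : forall s, 0 <= s <= B -> Rabs (f s) <= eta / 2 * chi_weight nu s).
{ intros s Hs. unfold f. rewrite Rabs_mult. rewrite (Rabs_right (chi_weight nu s)).
  2: apply Rle_ge, w_nonneg; lra. apply Rmult_le_compat_r. apply w_nonneg; lra.
  set (z := q * s / sqrt (INR nu) - d).
  assert (Hz : y <= z).
  { unfold z, d. assert (- (Rabs q * B) <= q * s).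
    { assert (Rabs (q * s) <= Rabs q * B). rewrite Rabs_mult. rewrite (Rabs_right s) by lra.
      apply Rmult_le_compat_l. apply Rabs_pos. lra. apply Rabs_le_between in H. lra. }
    unfold Rdiv. assert (0 < / sqrt (INR nu)) by (apply Rinv_0_lt_compat; auto).
    assert (- (Rabs q * B) * / sqrt (INR nu) <= q * s * / sqrt (INR nu)) by (apply Rmult_le_compat_r; lra).
    lra. }
  assert (h := Phi_range z). rewrite Rabs_right by lra.
  assert (h2 := Phi_le _ _ Hz). assert (h3 := phi_hi y Hy1). lra. }
assert (h := I_bound nu f 0 B (eta / 2) Hn Cf Bf ltac:(lra) ltac:(lra) HB ltac:(lra) Hp).
assert (h4 := HX' B (Rmax_r _ _)). lra.
Qed.

Lemma F_big_x nu eta : (1 <= nu)%nat -> 0 < eta -> exists x, 1 - eta < Fnct nu 0 x.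
Proof.
intros Hn He. assert (K := K_pos nu Hn). assert (Hr := sqrt_nu_pos nu Hn).
destruct (exp_small (eta * Iinf (chi_weight nu) / 4)) as [X [HX HX']].
{ apply Rdiv_lt_0_compat; [nra|lra]. }
set (B := Rmax (Rmax (B0 nu) X) 1). set (y := Rmax 1 (8 / eta)).
set (a := Rmin 1 (eta * Iinf (chi_weight nu) / 4)).
assert (Ha0 : 0 < a). { unfold a. apply Rmin_glb_lt. lra. apply Rdiv_lt_0_compat; [nra|lra]. }
assert (Ha1 : a <= 1) by apply Rmin_l.
assert (Ha2 : a <= eta * Iinf (chi_weight nu) / 4) by apply Rmin_r.
assert (HB1 : 1 <= B) by apply Rmax_r.
assert (HB : B0 nu <= B) by (eapply Rle_trans; [apply Rmax_l|apply Rmax_l]).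
assert (HBX : X <= B) by (eapply Rle_trans; [apply Rmax_r|apply Rmax_l]).
assert (Hy1 : 1 <= y) by apply Rmax_l.
assert (Hy2 : 2 / y <= eta / 4).
{ assert (8 / eta <= y) by apply Rmax_r. assert (0 < 8 / eta) by (apply Rdiv_lt_0_compat; lra).
  apply Rle_trans with (2 / (8 / eta)). unfold Rdiv. apply Rmult_le_compat_l. lra.
  apply Rinv_le_contravar; lra. right. field. lra. }
set (x := sqrt (INR nu) * y / a).
exists x.
cut (1 - Fnct nu 0 x < eta). lra.
rewrite Fcompl; auto. apply (Iinf_div_lt nu); auto.
set (f := fun s => (1 - Phi (x * s / sqrt (INR nu) - 0)) * chi_weight nu s).
assert (Cf : forall x, continuous f x).
{ intros z. unfold f. apply cmult; [|apply w_cont]. apply cplus. apply cconst. apply copp.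
  apply cPhiF. intros; auto_derive; easy. }
assert (Bf : forall s, 0 <= s -> Rabs (f s) <= chi_weight nu s).
{ intros s Hs. unfold f. rewrite Rabs_mult. rewrite (Rabs_right (chi_weight nu s)).
  2: apply Rle_ge, w_nonneg; lra. rewrite <- (Rmult_1_l (chi_weight nu s)) at 2.
  apply Rmult_le_compat_r. apply w_nonneg; lra. assert (h := Phi_range (x * s / sqrt (INR nu) - 0)).
  apply Rabs_le. lra. }
assert (Hp : forall s, a <= s <= B -> Rabs (f s) <= eta / 4 * chi_weight nu s).
{ intros s Hs. unfold f. rewrite Rabs_mult. rewrite (Rabs_right (chi_weight nu s)).
  2: apply Rle_ge, w_nonneg; lra. apply Rmult_le_compat_r. apply w_nonneg; lra.
  set (z := x * s / sqrt (INR nu) - 0).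
  assert (Hz : y <= z).
  { unfold z, x. replace (sqrt (INR nu) * y / a * s / sqrt (INR nu) - 0) with (y * (s / a)) by (field; lra).
    rewrite <- (Rmult_1_r y) at 1. apply Rmult_le_compat_l. lra.
    apply (Rmult_le_reg_r a); auto. unfold Rdiv. rewrite Rmult_assoc, Rinv_l by lra. lra. }
  assert (h := Phi_range z). rewrite Rabs_right by lra.
  assert (h2 := Phi_le _ _ Hz). assert (h3 := phi_hi y Hy1). lra. }
assert (h := I_bound nu f a B (eta / 4) Hn Cf Bf ltac:(lra) ltac:(lra) HB ltac:(lra) Hp).
assert (h4 := HX' B HBX). lra.
Qed.

Lemma F_small_x nu eta : (1 <= nu)%nat -> 0 < eta -> exists x, Fnct nu 0 x < eta.
Proof.
intros Hn He. destruct (F_big_x nu eta Hn He) as [x Hx]. exists (- x).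
rewrite F_sym; auto. lra.
Qed.

Lemma F_cont_x nu : (1 <= nu)%nat -> continuity (fun x => Fnct nu 0 x).
Proof.
intros Hn x0. assert (K := K_pos nu Hn). assert (Hr := sqrt_nu_pos nu Hn).
unfold continuity_pt, continue_in, limit1_in, limit_in. intros eps He. simpl. unfold R_dist.
destruct (exp_small (eps * Iinf (chi_weight nu) / 4)) as [X [HX HX']].
{ apply Rdiv_lt_0_compat; [nra|lra]. }
set (B := Rmax (B0 nu) X).
assert (HB : B0 nu <= B) by apply Rmax_l.
assert (HB0 := B0_ge0 nu).
set (r := eps * sqrt (INR nu) / (2 * (B + 1))).
assert (Hrp : 0 < r) by (unfold r; apply Rdiv_lt_0_compat; nra).
exists r. split; auto. intros x [_ Hx].
rewrite Fdiff; auto. apply (Iinf_div_lt2 nu); auto.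
set (e' := Rabs (x - x0) * B / sqrt (INR nu)).
assert (He' : 0 <= e').
{ unfold e'. unfold Rdiv. apply Rmult_le_pos. apply Rmult_le_pos. apply Rabs_pos. lra.
  left; apply Rinv_0_lt_compat; auto. }
assert (He'2 : e' <= eps / 2).
{ unfold e'. apply Rle_trans with (r * B / sqrt (INR nu)).
  unfold Rdiv. apply Rmult_le_compat_r. left; apply Rinv_0_lt_compat; auto.
  apply Rmult_le_compat_r. lra. lra.
  unfold r. apply Rle_trans with (eps / 2 * (B / (B + 1))). right. field. split; lra.
  rewrite <- (Rmult_1_r (eps / 2)) at 2. apply Rmult_le_compat_l. lra.
  apply (Rmult_le_reg_r (B + 1)). lra. unfold Rdiv. rewrite Rmult_assoc, Rinv_l by lra. lra. }
assert (Hp : forall s, 0 <= s <= B ->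
  Rabs ((Phi (x * s / sqrt (INR nu) - 0) - Phi (x0 * s / sqrt (INR nu) - 0)) * chi_weight nu s) <= e' * chi_weight nu s).
{ intros s Hs. rewrite Rabs_mult. rewrite (Rabs_right (chi_weight nu s)).
  2: apply Rle_ge, w_nonneg; lra. apply Rmult_le_compat_r. apply w_nonneg; lra.
  eapply Rle_trans. apply Phi_lip.
  replace (x * s / sqrt (INR nu) - 0 - (x0 * s / sqrt (INR nu) - 0)) with ((x - x0) * (s / sqrt (INR nu))) by (field; lra).
  rewrite Rabs_mult. unfold e'. rewrite (Rabs_right (s / sqrt (INR nu))).
  2: apply Rle_ge; unfold Rdiv; apply Rmult_le_pos; [lra| left; apply Rinv_0_lt_compat; auto].
  unfold Rdiv. rewrite Rmult_assoc. apply Rmult_le_compat_l. apply Rabs_pos.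
  apply Rmult_le_compat_r. left; apply Rinv_0_lt_compat; auto. lra. }
assert (h := I_bound nu _ 0 B e' Hn (diff_cont nu 0 x 0 x0) (diff_bound nu 0 x 0 x0) ltac:(lra) ltac:(lra) HB He' Hp).
assert (h4 := HX' B (Rmax_r _ _)).
assert (e' * Iinf (chi_weight nu) <= eps / 2 * Iinf (chi_weight nu)) by (apply Rmult_le_compat_r; lra).
assert (0 < eps * Iinf (chi_weight nu)) by nra. eapply Rle_lt_trans; [exact h|]. lra.
Qed.

Lemma F_dcont nu q : (1 <= nu)%nat -> continuity (fun d => Fnct nu d q).
Proof. intros Hn z. apply lip_cont. intros a b. apply F_lip_d; auto. Qed.

Lemma ivt_ex (f : R -> R) v : continuity f -> (exists a, f a < v) -> (exists b, v < f b) ->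
  exists x, f x = v.
Proof.
intros Hc [a Ha] [b Hb].
destruct (IVT_gen f a b v Hc) as [x [_ Hx]].
{ split. apply Rle_trans with (f a). apply Rmin_l. lra. apply Rle_trans with (f b). lra. apply Rmax_r. }
exists x; auto.
Qed.

Lemma tq_spec nu p : (1 <= nu)%nat -> 0 < p < 1 -> Fnct nu 0 (tquant nu p) = p.
Proof.
intros Hn Hp. unfold tquant. apply (epsilon_spec (inhabits 0) (fun x => Fnct nu 0 x = p)).
apply ivt_ex. apply F_cont_x; auto.
apply F_small_x; auto; lra.
destruct (F_big_x nu (1 - p) Hn ltac:(lra)) as [x Hx]. exists x. lra.
Qed.

Lemma del_ex nu q v : (1 <= nu)%nat -> 0 < v < 1 -> exists D, Fnct nu D q = v.
Proof.
intros Hn Hv. apply (ivt_ex (fun d => Fnct nu d q)). apply F_dcont; auto.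
apply F_small_d; auto; lra.
destruct (F_big_d nu q (1 - v) Hn ltac:(lra)) as [x Hx]. exists x. lra.
Qed.

Lemma sign_neg nu q D v : (1 <= nu)%nat -> Fnct nu D q = v -> Fnct nu 0 q < v -> D < 0.
Proof.
intros Hn HD Hq. destruct (Rlt_le_dec D 0) as [h|[h|h]]; auto.
- assert (hh0 := F_dec_d nu q 0 D Hn h). lra.
- subst. lra.
Qed.

Lemma sign_pos nu q D v : (1 <= nu)%nat -> Fnct nu D q = v -> v < Fnct nu 0 q -> 0 < D.
Proof.
intros Hn HD Hq. destruct (Rlt_le_dec 0 D) as [h|[h|h]]; auto.
- assert (hh0 := F_dec_d nu q D 0 Hn h). lra.
- subst. lra.
Qed.

Lemma sign_zero nu q D v : (1 <= nu)%nat -> Fnct nu D q = v -> v = Fnct nu 0 q -> D = 0.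
Proof.
intros Hn HD Hq. destruct (Rlt_le_dec D 0) as [h|[h|h]]; auto.
- assert (hh0 := F_dec_d nu q D 0 Hn h). lra.
- assert (hh0 := F_dec_d nu q 0 D Hn h). lra.
Qed.

Lemma big_sqrt n Y : (0 < n)%nat -> exists N : nat, forall m, (N <= m)%nat -> Y <= sqrt (INR m / INR n).
Proof.
intros Hn. assert (Hn' : 0 < INR n) by (apply lt_0_INR; auto).
destruct (INR_unbounded (Y * Y * INR n)) as [N HN].
exists N. intros m Hm. assert (INR N <= INR m) by (apply le_INR; auto).
destruct (Rle_dec Y 0). { eapply Rle_trans; [eauto| apply sqrt_pos]. }
rewrite <- (sqrt_square Y) by lra. apply sqrt_le_1_alt.
apply (Rmult_le_reg_r (INR n)); auto. replace (INR m / INR n * INR n) with (INR m) by (field; lra). lra.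
Qed.

Lemma seq_neg n D : (0 < n)%nat -> D < 0 -> Un_cv (fun m => 1 - Phi (sqrt (INR m / INR n) * D)) 1.
Proof.
intros Hn HD eps He.
set (y := Rmax 1 (4 / eps)).
assert (Hy1 : 1 <= y) by apply Rmax_l.
assert (Hy2 : 2 / y < eps).
{ assert (4 / eps <= y) by apply Rmax_r. assert (0 < 4 / eps) by (apply Rdiv_lt_0_compat; lra).
  apply Rle_lt_trans with (2 / (4 / eps)). unfold Rdiv. apply Rmult_le_compat_l. lra.
  apply Rinv_le_contravar; lra. replace (2 / (4 / eps)) with (eps / 2) by (field; lra). lra. }
destruct (big_sqrt n (y / (- D)) Hn) as [N HN]. exists N. intros m Hm. unfold R_dist.
assert (h := HN m Hm).
assert (Hz : sqrt (INR m / INR n) * D <= - y).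
{ apply (Rmult_le_compat_r (- D)) in h; [|lra]. unfold Rdiv in h. rewrite Rmult_assoc, Rinv_l in h by lra. lra. }
assert (h1 := Phi_le _ _ Hz). assert (h2 := phi_lo y Hy1). assert (h3 := Phi_range (sqrt (INR m / INR n) * D)).
rewrite Rabs_left1 by lra. lra.
Qed.

Lemma seq_pos n D : (0 < n)%nat -> 0 < D -> Un_cv (fun m => 1 - Phi (sqrt (INR m / INR n) * D)) 0.
Proof.
intros Hn HD eps He.
set (y := Rmax 1 (4 / eps)).
assert (Hy1 : 1 <= y) by apply Rmax_l.
assert (Hy2 : 2 / y < eps).
{ assert (4 / eps <= y) by apply Rmax_r. assert (0 < 4 / eps) by (apply Rdiv_lt_0_compat; lra).
  apply Rle_lt_trans with (2 / (4 / eps)). unfold Rdiv. apply Rmult_le_compat_l. lra.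
  apply Rinv_le_contravar; lra. replace (2 / (4 / eps)) with (eps / 2) by (field; lra). lra. }
destruct (big_sqrt n (y / D) Hn) as [N HN]. exists N. intros m Hm. unfold R_dist.
assert (h := HN m Hm).
assert (Hz : y <= sqrt (INR m / INR n) * D).
{ apply (Rmult_le_compat_r D) in h; [|lra]. unfold Rdiv in h. rewrite Rmult_assoc, Rinv_l in h by lra. lra. }
assert (h1 := Phi_le _ _ Hz). assert (h2 := phi_hi y Hy1). assert (h3 := Phi_range (sqrt (INR m / INR n) * D)).
rewrite Rminus_0_r. rewrite Rabs_right by lra. lra.
Qed.

Lemma seq_zero n : Un_cv (fun m => 1 - Phi (sqrt (INR m / INR n) * 0)) (/ 2).
Proof.
intros eps He. exists 0%nat. intros m _. unfold R_dist. rewrite Rmult_0_r, Phi0.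
replace (1 - / 2 - / 2) with 0 by field. rewrite Rabs_R0. lra.
Qed.

Theorem corollary2 (n d : nat) (alpha theta sigma c : R) :
  (0 < d)%nat -> (d < n)%nat -> 0 < alpha < 1 -> 0 < sigma ->
  let thL := theta - tquant (n - d) (1 - alpha / 2) * sigma / sqrt (INR n) in
  let thU := theta + tquant (n - d) (1 - alpha / 2) * sigma / sqrt (INR n) in
  let seqU := fun m : nat =>
    1 - Phi (sqrt (INR m / INR n) * deltaU n d alpha theta sigma c) in
  let seqL := fun m : nat =>
    1 - Phi (sqrt (INR m / INR n) * deltaL n d alpha theta sigma c) in
  (c < thL -> Un_cv seqU 1) /\ (c = thL -> Un_cv seqU (/ 2)) /\
  (thL < c -> Un_cv seqU 0) /\
  (c < thU -> Un_cv seqL 1) /\ (c = thU -> Un_cv seqL (/ 2)) /\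
  (thU < c -> Un_cv seqL 0).
Proof.
intros Hd Hdn Ha Hs thL thU seqU seqL.
assert (Hnu : (1 <= n - d)%nat) by lia.
assert (Hn0 : (0 < n)%nat) by lia.
assert (Hrn : 0 < sqrt (INR n)) by (apply sqrt_lt_R0, lt_0_INR; lia).
set (nu := (n - d)%nat) in *.
set (T := tquant nu (1 - alpha / 2)) in *.
assert (HT : Fnct nu 0 T = 1 - alpha / 2) by (apply tq_spec; auto; lra).
assert (HmT : Fnct nu 0 (- T) = alpha / 2) by (rewrite F_sym; auto; lra).
set (q := qstat n theta sigma c).
assert (HU : Fnct nu (deltaU n d alpha theta sigma c) q = alpha / 2).
{ unfold deltaU. apply (epsilon_spec (inhabits 0) (fun delta => Fnct (n - d) delta (qstat n theta sigma c) = alpha / 2)).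
  apply del_ex; auto; lra. }
assert (HL : Fnct nu (deltaL n d alpha theta sigma c) q = 1 - alpha / 2).
{ unfold deltaL. apply (epsilon_spec (inhabits 0) (fun delta => Fnct (n - d) delta (qstat n theta sigma c) = 1 - alpha / 2)).
  apply del_ex; auto; lra. }
set (DU := deltaU n d alpha theta sigma c) in *.
set (DL := deltaL n d alpha theta sigma c) in *.
assert (Hq : forall t, q - t = sqrt (INR n) / sigma * (c - (theta + t * sigma / sqrt (INR n)))).
{ intros t. unfold q, qstat. field. lra. }
assert (Hk : 0 < sqrt (INR n) / sigma) by (apply Rdiv_lt_0_compat; auto).
assert (EL : thL = theta + (- T) * sigma / sqrt (INR n)) by (unfold thL; fold T; field; lra).
assert (EU : thU = theta + T * sigma / sqrt (INR n)) by (unfold thU; fold T; reflexivity).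
assert (QL : q - (- T) = sqrt (INR n) / sigma * (c - thL)) by (rewrite EL; apply Hq).
assert (QU : q - T = sqrt (INR n) / sigma * (c - thU)) by (rewrite EU; apply Hq).
repeat split; intros Hc.
- apply seq_neg; auto. apply (sign_neg nu q DU (alpha / 2)); auto.
  rewrite <- HmT. apply F_inc_x; auto.
  assert (sqrt (INR n) / sigma * (c - thL) < 0) by nra. lra.
- assert (DU = 0). { apply (sign_zero nu q DU (alpha / 2)); auto.
    assert (q = - T) by (assert (sqrt (INR n) / sigma * (c - thL) = 0) by (rewrite Hc; ring); lra).
    rewrite H. auto. }
  unfold seqU. fold DU. rewrite H. apply seq_zero.
- apply seq_pos; auto. apply (sign_pos nu q DU (alpha / 2)); auto.
  rewrite <- HmT. apply F_inc_x; auto.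
  assert (0 < sqrt (INR n) / sigma * (c - thL)) by nra. lra.
- apply seq_neg; auto. apply (sign_neg nu q DL (1 - alpha / 2)); auto.
  rewrite <- HT. apply F_inc_x; auto.
  assert (sqrt (INR n) / sigma * (c - thU) < 0) by nra. lra.
- assert (DL = 0). { apply (sign_zero nu q DL (1 - alpha / 2)); auto.
    assert (q = T) by (assert (sqrt (INR n) / sigma * (c - thU) = 0) by (rewrite Hc; ring); lra).
    rewrite H. auto. }
  unfold seqL. fold DL. rewrite H. apply seq_zero.
- apply seq_pos; auto. apply (sign_pos nu q DL (1 - alpha / 2)); auto.
  rewrite <- HT. apply F_inc_x; auto.
  assert (0 < sqrt (INR n) / sigma * (c - thU)) by nra. lra.
Qed.
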